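(* Under the Physarum dynamics, let $e=\{u,v\}$ be a horizontal edge, i.e. $|p_u(t)-p_v(t)|\to0$ as $t\to\infty$. Then $D_e$ decays with rate $-1$ and $|Q_e|$ decays with rate at least $-1$.
   Context: Let $G=(N,E)$ be a finite connected undirected graph with two distinct vertices $s_0$ (source) and $s_1$ (sink). Each edge $e$ has a fixed length $L_e>0$. Each edge has a time-dependent diameter $D_e(t)$ with $D_e(0)>0$, and resistance $R_e=L_e/D_e$. At each time $t$, the vertex potentials $p_v$ (normalized by $p_{s_1}=0$) are the solution of $\sum_{u\in\delta(v)}(p_v-p_u)/R_{uv}=b_v$ for all $v$, where $\delta(v)$ is the set of neighbours of $v$, $b_{s_0}=1$, $b_{s_1}=-1$, $b_v=0$ otherwise; for an edge $e=\{u,v\}$ with an arbitrarily fixed orientation $(u,v)$ the current is $Q_e=(p_u-p_v)/R_e=D_e(p_u-p_v)/L_e$. The diameters evolve by $\dot D_e(t)=|Q_e(t)|-D_e(t)$ for all $e\in E$ (the ''Physarum dynamics''). Decay rates: let $r\le 0$. A nonnegative quantity $X(t)$ decays with rate at least $r$ if for every $\varepsilon>0$ there is $A>0$ with $X(t)\le Ae^{(r+\varepsilon)t}$ for all $t\ge0$; it decays with rate at most $r$ if for every $\varepsilon>0$ there is $a>0$ with $X(t)\ge ae^{(r-\varepsilon)t}$ for all $t\ge 0$; it decays with rate $r$ if both hold. *)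

(* Defs.v *)
From Stdlib Require Import Reals Lra Lia Arith.
Open Scope R_scope.

Fixpoint sum_upto (f : nat -> R) (m : nat) : R :=
  match m with
  | O => 0
  | S k => sum_upto f k + f k
  end.

(* Graph: vertices 0..n-1, edges 0..m-1, edge i joins eu i and ev i
   (this also fixes the orientation (eu i, ev i) of edge i). *)
Inductive Reach (m : nat) (eu ev : nat -> nat) (a : nat) : nat -> Prop :=
  | reach_refl : Reach m eu ev a a
  | reach_step : forall i w x, (i < m)%nat -> Reach m eu ev a w ->
      ((eu i = w /\ ev i = x) \/ (ev i = w /\ eu i = x)) -> Reach m eu ev a x.

Definition simple_connected_graph (n m : nat) (eu ev : nat -> nat) : Prop :=
  (forall i, (i < m)%nat -> (eu i < n)%nat /\ (ev i < n)%nat /\ eu i <> ev i) /\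
  (forall i j, (i < m)%nat -> (j < m)%nat -> i <> j ->
     ~ ((eu i = eu j /\ ev i = ev j) \/ (eu i = ev j /\ ev i = eu j))) /\
  (forall a c, (a < n)%nat -> (c < n)%nat -> Reach m eu ev a c).

Definition supply (s0 s1 v : nat) : R :=
  if Nat.eqb v s0 then 1 else if Nat.eqb v s1 then -1 else 0.

Definition net_out (m : nat) (eu ev : nat -> nat) (L Dt : nat -> R)
    (pt : nat -> R) (v : nat) : R :=
  sum_upto (fun i =>
    if Nat.eqb (eu i) v then (pt v - pt (ev i)) / (L i / Dt i)
    else if Nat.eqb (ev i) v then (pt v - pt (eu i)) / (L i / Dt i)
    else 0) m.

Definition current (eu ev : nat -> nat) (L : nat -> R) (D : nat -> R -> R)
    (p : R -> nat -> R) (i : nat) (t : R) : R :=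
  D i t * (p t (eu i) - p t (ev i)) / L i.

Definition decays_rate_at_least (X : R -> R) (r : R) : Prop :=
  forall eps, 0 < eps -> exists A, 0 < A /\
    forall t, 0 <= t -> X t <= A * exp ((r + eps) * t).

Definition decays_rate_at_most (X : R -> R) (r : R) : Prop :=
  forall eps, 0 < eps -> exists a, 0 < a /\
    forall t, 0 <= t -> a * exp ((r - eps) * t) <= X t.

Definition decays_rate (X : R -> R) (r : R) : Prop :=
  decays_rate_at_least X r /\ decays_rate_at_most X r.

(* Main.v *)
Require Import Defs.
From Stdlib Require Import Reals Lra Lia.
Open Scope R_scope.

Lemma sum_ext f g m : (forall k, (k < m)%nat -> f k = g k) -> sum_upto f m = sum_upto g m.
Proof. induction m; simpl; intros H; auto. rewrite IHm by (intros; apply H; lia). rewrite H by lia; auto. Qed.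
Lemma sum_plus f g m : sum_upto (fun k => f k + g k) m = sum_upto f m + sum_upto g m.
Proof. induction m; simpl; [lra|]. rewrite IHm; ring. Qed.
Lemma sum_scal a f m : a * sum_upto f m = sum_upto (fun k => a * f k) m.
Proof. induction m; simpl; [ring|]. rewrite <- IHm; ring. Qed.
Lemma sum_zero m : sum_upto (fun _ => 0) m = 0.
Proof. induction m; simpl; [ring|]. rewrite IHm; ring. Qed.
Lemma sum_swap (f : nat -> nat -> R) n m :
  sum_upto (fun v => sum_upto (fun i => f i v) m) n = sum_upto (fun i => sum_upto (fun v => f i v) n) m.
Proof.
induction n; simpl. rewrite sum_zero; auto.
rewrite IHn. rewrite <- sum_plus. auto.
Qed.
Lemma sum_single a x n : sum_upto (fun v => if Nat.eqb a v then x else 0) n = if Nat.ltb a n then x else 0.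
Proof.
induction n; simpl. destruct a; auto. rewrite IHn.
destruct (Nat.ltb_spec a n), (Nat.ltb_spec a (S n)), (Nat.eqb_spec a n); try lia; lra.
Qed.
Lemma sum_le f g m : (forall k, (k < m)%nat -> f k <= g k) -> sum_upto f m <= sum_upto g m.
Proof. induction m; simpl; intros H; [lra|]. assert (f m <= g m) by (apply H; lia).
 assert (sum_upto f m <= sum_upto g m) by (apply IHm; intros; apply H; lia). lra. Qed.
Lemma sum_ge f m e : (forall k, (k < m)%nat -> 0 <= f k) -> (e < m)%nat -> f e <= sum_upto f m.
Proof.
induction m; simpl; intros H He; [lia|].
assert (0 <= sum_upto f m).
{ rewrite <- (sum_zero m). apply sum_le. intros; apply H; lia. }
destruct (Nat.eq_dec e m). subst. lra.
assert (f e <= sum_upto f m) by (apply IHm; [intros; apply H; lia|lia]).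
assert (0 <= f m) by (apply H; lia). lra.
Qed.

Definition ind (P : nat -> R) c v : R := if Rle_dec c (P v) then 1 else 0.

Lemma cut_c n m eu ev L Dt P s0 s1 c :
 (forall i, (i<m)%nat -> (eu i < n)%nat /\ (ev i < n)%nat /\ eu i <> ev i) ->
 (forall v, (v<n)%nat -> net_out m eu ev L Dt P v = supply s0 s1 v) ->
 sum_upto (fun i => (ind P c (eu i) - ind P c (ev i)) * ((P (eu i) - P (ev i)) / (L i / Dt i))) m <= 1.
Proof.
intros Hg HK.
assert (E1 : sum_upto (fun v => ind P c v * net_out m eu ev L Dt P v) n =
             sum_upto (fun v => ind P c v * supply s0 s1 v) n).
{ apply sum_ext; intros; rewrite HK; auto. }
assert (E2 : sum_upto (fun v => ind P c v * supply s0 s1 v) n <= 1).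
{ apply Rle_trans with (sum_upto (fun v => if Nat.eqb s0 v then 1 else 0) n).
  - apply sum_le. intros k _. unfold supply, ind.
    destruct (Nat.eqb_spec k s0), (Nat.eqb_spec s0 k), (Nat.eqb_spec k s1), (Rle_dec c (P k)); try lia; lra.
  - rewrite sum_single. destruct (Nat.ltb s0 n); lra. }
unfold net_out in E1.
replace (sum_upto (fun v => ind P c v * sum_upto _ m) n) with
  (sum_upto (fun v => sum_upto (fun i => ind P c v * (if Nat.eqb (eu i) v then (P v - P (ev i)) / (L i / Dt i)
    else if Nat.eqb (ev i) v then (P v - P (eu i)) / (L i / Dt i) else 0)) m) n) in E1
  by (apply sum_ext; intros; symmetry; apply sum_scal).
rewrite sum_swap in E1.
rewrite <- E1 in E2.
eapply Rle_trans; [|exact E2].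
right. apply sum_ext. intros i Hi.
destruct (Hg i Hi) as [Hu [Hv Huv]].
transitivity (sum_upto (fun v => (if Nat.eqb (eu i) v then ind P c (eu i) * ((P (eu i) - P (ev i)) / (L i / Dt i)) else 0)
   + (if Nat.eqb (ev i) v then - (ind P c (ev i) * ((P (eu i) - P (ev i)) / (L i / Dt i))) else 0)) n).
- rewrite sum_plus, !sum_single.
  destruct (Nat.ltb_spec (eu i) n), (Nat.ltb_spec (ev i) n); try lia. ring.
- apply sum_ext. intros v _.
  destruct (Nat.eqb_spec (eu i) v), (Nat.eqb_spec (ev i) v); try lia; subst; unfold Rdiv; ring.
Qed.

Lemma cut n m eu ev L Dt P s0 s1 e :
 (forall i, (i<m)%nat -> (eu i < n)%nat /\ (ev i < n)%nat /\ eu i <> ev i) ->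
 (forall i, (i<m)%nat -> 0 < L i) -> (forall i, (i<m)%nat -> 0 <= Dt i) ->
 (forall v, (v<n)%nat -> net_out m eu ev L Dt P v = supply s0 s1 v) -> (e < m)%nat ->
 Rabs ((P (eu e) - P (ev e)) * Dt e / L e) <= 1.
Proof.
intros Hg HL HD HK He.
assert (Hpos : forall c i, (i < m)%nat -> 0 <= (ind P c (eu i) - ind P c (ev i)) * ((P (eu i) - P (ev i)) / (L i / Dt i))).
{ intros c i Hi. assert (0 < L i) by auto. assert (0 <= Dt i) by auto.
  assert (Q : (P (eu i) - P (ev i)) / (L i / Dt i) = (P (eu i) - P (ev i)) * (Dt i / L i)).
  { destruct (Req_dec (Dt i) 0) as [Z|Z]. rewrite Z. unfold Rdiv. rewrite Rinv_0, Rmult_0_r, Rinv_0. ring.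
    field; lra. }
  rewrite Q. assert (0 <= Dt i / L i) by (unfold Rdiv; apply Rmult_le_pos; [lra|left; apply Rinv_0_lt_compat; lra]).
  unfold ind. destruct (Rle_dec c (P (eu i))), (Rle_dec c (P (ev i))); nra. }
assert (Qe : (P (eu e) - P (ev e)) / (L e / Dt e) = (P (eu e) - P (ev e)) * Dt e / L e).
{ assert (0 < L e) by auto. assert (0 <= Dt e) by auto.
  destruct (Req_dec (Dt e) 0) as [Z|Z]. rewrite Z. unfold Rdiv. rewrite Rinv_0, Rmult_0_r, Rinv_0. ring.
    field; lra. }
rewrite <- Qe.
destruct (Rlt_or_le (P (ev e)) (P (eu e))) as [Hlt|Hle].
- pose proof (sum_ge _ m e (Hpos (P (eu e))) He) as G.
  pose proof (cut_c n m eu ev L Dt P s0 s1 (P (eu e)) Hg HK) as C.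
  unfold ind in G at 1 2. destruct (Rle_dec (P (eu e)) (P (eu e))); [|lra].
  destruct (Rle_dec (P (eu e)) (P (ev e))); [lra|].
  assert (G2 : Rabs ((P (eu e) - P (ev e)) / (L e / Dt e)) = (1-0)*((P (eu e) - P (ev e)) / (L e / Dt e))).
  { rewrite Rabs_pos_eq. ring. specialize (Hpos (P (eu e)) e He). unfold ind in Hpos.
    destruct (Rle_dec (P (eu e)) (P (eu e))); [|lra]. destruct (Rle_dec (P (eu e)) (P (ev e))); [lra|]. lra. }
  lra.
- pose proof (sum_ge _ m e (Hpos (P (ev e))) He) as G.
  pose proof (cut_c n m eu ev L Dt P s0 s1 (P (ev e)) Hg HK) as C.
  destruct Hle as [Hle|Heq].
  + unfold ind in G at 1 2. destruct (Rle_dec (P (ev e)) (P (ev e))); [|lra].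
    destruct (Rle_dec (P (ev e)) (P (eu e))); [lra|].
    specialize (Hpos (P (ev e)) e He). unfold ind in Hpos.
    destruct (Rle_dec (P (ev e)) (P (ev e))); [|lra]. destruct (Rle_dec (P (ev e)) (P (eu e))); [lra|].
    rewrite Rabs_left1 by lra. lra.
  + rewrite Heq. replace (P (ev e) - P (ev e)) with 0 by ring. unfold Rdiv. rewrite Rmult_0_l, Rabs_R0. lra.
Qed.
Lemma dexp (f : R -> R) (c d x : R) : derivable_pt_lim f x d ->
  derivable_pt_lim (fun y => f y * exp (c*y)) x (d * exp (c*x) + f x * (c * exp (c*x))).
Proof.
intros H.
assert (H2 : derivable_pt_lim (fun y => exp (c*y)) x (exp (c*x) * c)).
{ apply (derivable_pt_lim_comp (fun y => c*y) exp x c (exp (c*x))).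
  - pose proof (derivable_pt_lim_mult _ _ x _ _ (derivable_pt_lim_const c x) (derivable_pt_lim_id x)) as K.
    unfold fct_cte, id in K. assert (K2 : derivable_pt_lim (fun y => c*y) x (0*x+c*1)) by exact K.
    replace (0*x+c*1) with c in K2 by ring. exact K2.
  - apply derivable_pt_lim_exp. }
replace (d * exp (c*x) + f x * (c * exp (c*x))) with (d * exp (c*x) + f x * (exp (c*x) * c)) by ring.
apply (derivable_pt_lim_mult f (fun y => exp (c*y)) x d _ H H2).
Qed.
Lemma exp_le x y : x <= y -> exp x <= exp y.
Proof. intros [H|H]. left; apply exp_increasing; auto. subst; lra. Qed.
Lemma nonincr (F F' : R -> R) a b : 0 < a <= b ->
  (forall x, 0 < x -> derivable_pt_lim F x (F' x)) ->
  (forall x, a <= x <= b -> F' x <= 0) -> F b <= F a.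
Proof.
intros [Ha [Hab|Hab]] HD HF; [|subst; lra].
destruct (MVT_cor2 F F' a b Hab) as [c [Hc1 Hc2]].
- intros c Hc; apply HD; lra.
- assert (F' c <= 0) by (apply HF; lra). nra.
Qed.
Lemma qabs Dv d Lv : 0 <= Dv -> 0 < Lv -> Rabs (Dv * d / Lv) = Dv * Rabs d / Lv.
Proof. intros. unfold Rdiv. rewrite !Rabs_mult, Rabs_inv, (Rabs_pos_eq Dv), (Rabs_pos_eq Lv); lra. Qed.
Lemma qbound Dv d Lv c : 0 <= Dv -> 0 < Lv -> Rabs d <= c * Lv -> Rabs (Dv * d / Lv) <= c * Dv.
Proof. intros H1 H2 H3. rewrite qabs by auto. unfold Rdiv.
 assert (E : Lv * / Lv = 1) by (apply Rinv_r; lra). assert (0 < / Lv) by (apply Rinv_0_lt_compat; lra).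
 assert (H4 : Dv * Rabs d <= Dv * (c * Lv)) by (apply Rmult_le_compat_l; auto).
 apply Rmult_le_compat_r with (r := / Lv) in H4; [|lra].
 replace (c * Dv) with (Dv * (c * Lv) * / Lv). lra. replace (Dv * (c * Lv) * / Lv) with (c * Dv * (Lv * / Lv)) by ring. rewrite E. ring.
Qed.
Lemma nondecr (F F' : R -> R) a b : 0 < a <= b ->
  (forall x, 0 < x -> derivable_pt_lim F x (F' x)) ->
  (forall x, a <= x <= b -> 0 <= F' x) -> F a <= F b.
Proof.
intros [Ha [Hab|Hab]] HD HF; [|subst; lra].
destruct (MVT_cor2 F F' a b Hab) as [c [Hc1 Hc2]].
- intros c Hc; apply HD; lra.
- assert (0 <= F' c) by (apply HF; lra). nra.
Qed.

Theorem mainTheorem12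
  (n m : nat) (eu ev : nat -> nat) (L : nat -> R) (s0 s1 : nat)
  (D : nat -> R -> R) (p : R -> nat -> R) (e : nat) :
  simple_connected_graph n m eu ev ->
  (s0 < n)%nat -> (s1 < n)%nat -> s0 <> s1 ->
  (forall i, (i < m)%nat -> 0 < L i) ->
  (forall i, (i < m)%nat -> 0 < D i 0) ->
  (* potentials: normalized Kirchhoff solution at every time t >= 0 *)
  (forall t, 0 <= t -> p t s1 = 0 /\
     forall v, (v < n)%nat ->
       net_out m eu ev L (fun i => D i t) (p t) v = supply s0 s1 v) ->
  (* Physarum dynamics: D_e' = |Q_e| - D_e for t > 0, D_e right-continuous at 0 *)
  (forall i, (i < m)%nat -> forall t, 0 < t ->
     derivable_pt_lim (D i) t (Rabs (current eu ev L D p i t) - D i t)) ->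
  (forall i, (i < m)%nat -> forall eps, 0 < eps -> exists delta, 0 < delta /\
     forall t, 0 <= t < delta -> Rabs (D i t - D i 0) < eps) ->
  (* e is a horizontal edge *)
  (e < m)%nat ->
  (forall eps, 0 < eps -> exists T, forall t, T <= t ->
     Rabs (p t (eu e) - p t (ev e)) < eps) ->
  decays_rate (fun t => D e t) (-1) /\
  decays_rate_at_least (fun t => Rabs (current eu ev L D p e t)) (-1).
Proof.
intros [Hg1 _] Hs0 Hs1 Hne HL HD0 HK Hder Hrc He Hh.
assert (S1 : forall i, (i < m)%nat -> forall t, 0 <= t -> D i 0 <= D i t * exp t).
{ intros i Hi t Ht. destruct Ht as [Ht|Ht]; [|subst; rewrite exp_0; lra].
  destruct (Rle_or_lt (D i 0) (D i t * exp t)) as [ok|bad]; [auto|exfalso].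
  assert (HDi := HD0 i Hi).
  set (eta := Rmin (D i 0) (D i 0 - D i t * exp t) / 2).
  assert (eta_pos : 0 < eta) by (unfold eta, Rmin; destruct Rle_dec; lra).
  assert (eta_le1 : eta <= D i 0 / 2) by (unfold eta, Rmin; destruct Rle_dec; lra).
  assert (eta_le2 : eta <= (D i 0 - D i t * exp t) / 2) by (unfold eta, Rmin; destruct Rle_dec; lra).
  destruct (Hrc i Hi eta eta_pos) as [delta [Hdl Hdt]].
  set (s := Rmin t (delta / 2)).
  assert (s_pos : 0 < s) by (unfold s, Rmin; destruct Rle_dec; lra).
  assert (s_le : s <= t) by (unfold s, Rmin; destruct Rle_dec; lra).
  assert (s_lt : s < delta) by (unfold s, Rmin; destruct Rle_dec; lra).
  specialize (Hdt s ltac:(lra)). apply Rabs_def2 in Hdt.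
  assert (M := nondecr (fun y => D i y * exp (1*y))
     (fun y => (Rabs (current eu ev L D p i y) - D i y) * exp (1*y) + D i y * (1 * exp (1*y))) s t
     ltac:(lra) ltac:(intros; apply dexp; apply Hder; auto)).
  simpl in M. rewrite !Rmult_1_l in M.
  assert (Ms : D i s * exp s <= D i t * exp t).
  { apply M. intros x Hx. rewrite !Rmult_1_l.
    pose proof (exp_pos x). pose proof (Rabs_pos (current eu ev L D p i x)). nra. }
  assert (1 <= exp s) by (rewrite <- exp_0; apply exp_le; lra).
  nra. }
assert (Dpos : forall i, (i < m)%nat -> forall t, 0 <= t -> 0 < D i t).
{ intros i Hi t Ht. pose proof (S1 i Hi t Ht). pose proof (HD0 i Hi). pose proof (exp_pos t).
  destruct (Rle_or_lt (D i t) 0); [|auto]. nra. }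
assert (S2 : forall t, 0 <= t -> Rabs (current eu ev L D p e t) <= 1).
{ intros t Ht. unfold current.
  replace (D e t * (p t (eu e) - p t (ev e)) / L e) with ((p t (eu e) - p t (ev e)) * D e t / L e) by (unfold Rdiv; ring).
  apply (cut n m eu ev L (fun j => D j t) (p t) s0 s1 e); auto.
  - intros j Hj. left; apply Dpos; auto.
  - apply HK; auto. }
assert (HLe := HL e He). assert (HDe := HD0 e He).
assert (S3 : forall t, 0 <= t -> D e t <= 1 + 3 * D e 0).
{ intros t Ht.
  assert (G : (D e t - 1) * exp t <= 3 * D e 0).
  { destruct Ht as [Ht|Ht]; [|subst; rewrite exp_0; lra].
    destruct (Hrc e He 1 ltac:(lra)) as [delta [Hdl Hdt]].
    set (s := Rmin t (Rmin (delta / 2) 1)).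
    assert (s_pos : 0 < s) by (unfold s, Rmin; repeat destruct Rle_dec; lra).
    assert (s_le : s <= t) by (unfold s, Rmin; repeat destruct Rle_dec; lra).
    assert (s_lt : s < delta) by (unfold s, Rmin; repeat destruct Rle_dec; lra).
    assert (s_1 : s <= 1) by (unfold s, Rmin; repeat destruct Rle_dec; lra).
    specialize (Hdt s ltac:(lra)). apply Rabs_def2 in Hdt.
    assert (M := nonincr (fun y => (D e - fct_cte 1)%F y * exp (1*y))
     (fun y => (Rabs (current eu ev L D p e y) - D e y - 0) * exp (1*y) + (D e - fct_cte 1)%F y * (1 * exp (1*y))) s t
     ltac:(lra) ltac:(intros; apply dexp; apply derivable_pt_lim_minus; [apply Hder; auto|apply derivable_pt_lim_const])).
    unfold minus_fct, fct_cte in M. simpl in M. rewrite !Rmult_1_l in M.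
    assert (Ms : (D e t - 1) * exp t <= (D e s - 1) * exp s).
    { apply M. intros x Hx. rewrite !Rmult_1_l.
      pose proof (exp_pos x). pose proof (S2 x ltac:(lra)). nra. }
    assert (1 <= exp s) by (rewrite <- exp_0; apply exp_le; lra).
    assert (exp s <= 3) by (apply Rle_trans with (exp 1); [apply exp_le; lra|apply exp_le_3]).
    destruct (Rle_or_lt (D e s - 1) 0); nra. }
  assert (1 <= exp t) by (rewrite <- exp_0; apply exp_le; lra).
  destruct (Rle_or_lt (D e t) 1); nra. }
assert (DB : decays_rate_at_least (fun t => D e t) (-1)).
{  intros eps Heps.
  destruct (Hh (eps * L e) ltac:(nra)) as [Ta HTa].
  set (T1 := Rmax 1 Ta).
  assert (T1_1 : 1 <= T1) by (unfold T1, Rmax; destruct Rle_dec; lra).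
  assert (T1_a : Ta <= T1) by (unfold T1, Rmax; destruct Rle_dec; lra).
  exists ((1 + 3 * D e 0) * exp T1). split. pose proof (exp_pos T1); nra.
  intros t Ht.
  assert (Ex : exp T1 * exp ((-1 + eps) * t) = exp (T1 + (-1+eps)*t)) by (rewrite exp_plus; auto).
  destruct (Rle_or_lt t T1) as [Hle|Hlt].
  + assert (1 <= exp (T1 + (-1+eps)*t)) by (rewrite <- exp_0; apply exp_le; nra).
    pose proof (S3 t Ht). nra.
  + assert (M := nonincr (fun y => D e y * exp ((1-eps)*y))
     (fun y => (Rabs (current eu ev L D p e y) - D e y) * exp ((1-eps)*y) + D e y * ((1-eps) * exp ((1-eps)*y))) T1 t
     ltac:(lra) ltac:(intros; apply dexp; apply Hder; auto)).
    simpl in M.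
    assert (Mt : D e t * exp ((1-eps)*t) <= D e T1 * exp ((1-eps)*T1)).
    { apply M. intros x Hx. pose proof (exp_pos ((1-eps)*x)).
      assert (Hq : Rabs (current eu ev L D p e x) <= eps * D e x).
      { unfold current. apply qbound; auto. left; apply Dpos; auto; lra. left; apply HTa; lra. }
      nra. }
    assert (E2 : exp ((1-eps)*T1) <= exp T1) by (apply exp_le; nra).
    assert (E3 : exp ((1-eps)*t) * exp ((-1+eps)*t) = 1) by (rewrite <- exp_plus; replace ((1-eps)*t + (-1+eps)*t) with 0 by ring; apply exp_0).
    pose proof (S3 T1 ltac:(lra)). pose proof (Dpos e He T1 ltac:(lra)). pose proof (Dpos e He t ltac:(lra)).
    pose proof (exp_pos ((-1+eps)*t)). pose proof (exp_pos ((1-eps)*T1)).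
    assert (D e t = D e t * exp ((1-eps)*t) * exp ((-1+eps)*t)) by (rewrite Rmult_assoc, E3; ring).
    assert (D e T1 * exp ((1-eps)*T1) <= (1 + 3 * D e 0) * exp T1) by (apply Rmult_le_compat; lra).
    assert (D e t * exp ((1-eps)*t) * exp ((-1+eps)*t) <= (1 + 3 * D e 0) * exp T1 * exp ((-1+eps)*t))
      by (apply Rmult_le_compat_r; lra).
    lra.
}
split; [split; [exact DB|]|].
-
  intros eps Heps. exists (D e 0). split; auto. intros t Ht.
  pose proof (S1 e He t Ht). pose proof (Dpos e He t Ht).
  assert (E : exp ((-1 - eps) * t) * exp t = exp (- (eps * t))) by (rewrite <- exp_plus; f_equal; ring).
  assert (exp (- (eps*t)) <= 1) by (rewrite <- exp_0; apply exp_le; nra).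
  pose proof (exp_pos ((-1 - eps) * t)).
  assert (D e 0 * exp ((-1 - eps) * t) <= D e t * exp t * exp ((-1 - eps) * t)) by (apply Rmult_le_compat_r; lra).
  nra.
- intros eps Heps.
  destruct (DB eps Heps) as [A [HA HAt]].
  destruct (Hh (1 * L e) ltac:(nra)) as [Ta HTa].
  set (T1 := Rmax 1 Ta).
  assert (T1_1 : 1 <= T1) by (unfold T1, Rmax; destruct Rle_dec; lra).
  assert (T1_a : Ta <= T1) by (unfold T1, Rmax; destruct Rle_dec; lra).
  exists (A + exp T1). split. pose proof (exp_pos T1); nra.
  intros t Ht.
  pose proof (exp_pos ((-1 + eps) * t)).
  assert (Ex : exp T1 * exp ((-1 + eps) * t) = exp (T1 + (-1+eps)*t)) by (rewrite exp_plus; auto).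
  destruct (Rle_or_lt t T1) as [Hle|Hlt].
  + assert (1 <= exp (T1 + (-1+eps)*t)) by (rewrite <- exp_0; apply exp_le; nra).
    pose proof (S2 t Ht). nra.
  + assert (Hq : Rabs (current eu ev L D p e t) <= 1 * D e t).
    { unfold current. apply qbound; auto. left; apply Dpos; auto; lra. left; apply HTa; lra. }
    pose proof (HAt t Ht). pose proof (exp_pos T1). nra.
Qed.
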